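(* Let $d\geq 1$ be an integer and let $\mathbb{C}^{d(d+1)/2}$ denote the complex vector space whose coordinates are indexed by the pairs $(i,j)$ of integers with $0\leq i<j\leq d$. Define $\phi:(\mathbb{C}^\times)^{d+1}\to\mathbb{C}^{d(d+1)/2}$ by \[ \phi(w_0,\dots,w_d)=\left(\frac{w_i}{w_j}+\frac{w_j}{w_i}\right)_{0\leq i<j\leq d}. \] In the polynomial ring $\mathbb{C}[X_{i,j}\mid 0\leq i<j\leq d]$, write $X_{j,i}=X_{i,j}$, and let $I$ be the ideal generated by the polynomials \[ g(X_{i,j},X_{j,k},X_{i,k})\quad\text{for all pairwise distinct } i,j,k\in\{0,\dots,d\}, \] \[ h(X_{i,j},X_{i,k},X_{i,\ell},X_{j,k},X_{j,\ell},X_{k,\ell})\quad\text{for all pairwise distinct } i,j,k,\ell\in\{0,\dots,d\}. \] Then the image of $\phi$ coincides with the set of common zeros of $I$ in $\mathbb{C}^{d(d+1)/2}$.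
   Context: Here $g(X,Y,Z)=X^2+Y^2+Z^2-XYZ-4$ and \[ h(X_{0,1},X_{0,2},X_{0,3},X_{1,2},X_{1,3},X_{2,3})=\det\begin{bmatrix}2&X_{0,1}&X_{0,2}\\ X_{0,1}&2&X_{1,2}\\ X_{0,3}&X_{1,3}&X_{2,3}\end{bmatrix}. \] *)

(* Defs.v *)
From HB Require Import structures.
From mathcomp Require Import all_boot all_order all_algebra.
From mathcomp Require Import complex Rstruct.
Set Implicit Arguments. Unset Strict Implicit. Unset Printing Implicit Defensive.
Import Order.TTheory GRing.Theory Num.Theory.
Local Open Scope ring_scope.

Definition CC : closedFieldType := (Rdefinitions.R)[i].

Definition pairs (d : nat) := {p : 'I_d.+1 * 'I_d.+1 | (p.1 < p.2)%N}.

Definition point (d : nat) := {ffun pairs d -> CC}.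

(* Coordinate X_{i,j} with the convention X_{j,i} = X_{i,j}
   (value 0 on the diagonal, which is never used). *)
Definition coord (d : nat) (x : point d) (i j : 'I_d.+1) : CC :=
  match @insub _ (fun p : 'I_d.+1 * 'I_d.+1 => (p.1 < p.2)%N) (pairs d) (i, j) with
  | Some p => x p
  | None =>
    match @insub _ (fun p : 'I_d.+1 * 'I_d.+1 => (p.1 < p.2)%N) (pairs d) (j, i) with
    | Some p => x p
    | None => 0
    end
  end.

Definition phi (d : nat) (w : 'I_d.+1 -> CC) : point d :=
  [ffun p : pairs d => w (val p).1 / w (val p).2 + w (val p).2 / w (val p).1].

Definition g (X Y Z : CC) : CC := X ^+ 2 + Y ^+ 2 + Z ^+ 2 - X * Y * Z - 4.

Definition hmx (x01 x02 x03 x12 x13 x23 : CC) : 'M[CC]_3 :=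
  \matrix_(r < 3, c < 3)
    nth 0 (nth [::] [:: [:: 2; x01; x02]; [:: x01; 2; x12]; [:: x03; x13; x23]] r) c.

Definition h (x01 x02 x03 x12 x13 x23 : CC) : CC := \det (hmx x01 x02 x03 x12 x13 x23).

Definition in_zero_locus_I (d : nat) (x : point d) : Prop :=
  (forall i j k : 'I_d.+1, i != j -> j != k -> i != k ->
     g (coord x i j) (coord x j k) (coord x i k) = 0) /\
  (forall i j k l : 'I_d.+1,
     i != j -> i != k -> i != l -> j != k -> j != l -> k != l ->
     h (coord x i j) (coord x i k) (coord x i l)
       (coord x j k) (coord x j l) (coord x k l) = 0).

(* Main.v *)
Require Import Defs.
From HB Require Import structures.
From mathcomp Require Import all_boot all_order all_algebra.
From mathcomp Require Import complex Rstruct.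
From mathcomp Require Import ring.
Import Order.TTheory GRing.Theory Num.Theory.
Local Open Scope ring_scope.

Lemma h_expand a b c d e f :
  h a b c d e f = 2*(2*f - d*e) - a*(a*f - d*c) + b*(a*e - 2*c).
Proof.
rewrite /h (expand_det_row _ ord0) !big_ord_recl big_ord0.
rewrite /cofactor !(expand_det_row _ ord0) !big_ord_recl big_ord0 /cofactor.
rewrite !det_mx11 !mxE /=.
rewrite !big_ord0 /bump /= !expr0 ?expr1 ?expr2; ring.
Qed.

Lemma h_lin a b c d e X Y :
  h a b c d e X - h a b c d e Y = (4 - a^+2) * (X - Y).
Proof. rewrite !h_expand; ring. Qed.

Lemma g_f (a b c : CC) : a != 0 -> b != 0 -> c != 0 ->
  g (a/b+b/a) (b/c+c/b) (a/c+c/a) = 0.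
Proof. move=> ha hb hc; rewrite /g; field; do ?[apply/andP; split]; by rewrite ?mulf_neq0. Qed.

Lemma h_f (a b c e : CC) : a != 0 -> b != 0 -> c != 0 -> e != 0 ->
  h (a/b+b/a) (a/c+c/a) (a/e+e/a) (b/c+c/b) (b/e+e/b) (c/e+e/c) = 0.
Proof. move=> ha hb hc he; rewrite h_expand; field; do ?[apply/andP; split]; by rewrite ?mulf_neq0. Qed.

Lemma Qlem (a b Y : CC) : a != 0 -> b != 0 -> g (a + a^-1) Y (b + b^-1) = 0 ->
  Y = a/b+b/a \/ Y = a*b + (a*b)^-1.
Proof.
move=> ha hb H.
have: (Y - (a/b+b/a)) * (Y - (a*b+(a*b)^-1)) = 0.
  rewrite -H /g; field; do ?[apply/andP; split]; by rewrite ?mulf_neq0.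
by move/eqP; rewrite mulf_eq0 !subr_eq0 => /orP[/eqP->|/eqP->]; [left|right].
Qed.

Lemma root_ex (c : CC) : exists s : CC, (s != 0) && (s + s^-1 == c).
Proof.
have [s Hs] := @solve_monicpoly CC 2 (nth 0 [:: -1; c]) isT.
rewrite !big_ord_recl big_ord0 /= expr0 expr1 addr0 mulr1 in Hs.
have s0 : s != 0.
  apply/eqP => E; move: Hs; rewrite E expr0n /= mulr0 addr0 => /eqP.
  by rewrite eq_sym oppr_eq0 oner_eq0.
exists s; rewrite s0 /=; apply/eqP.
have -> : s + s^-1 = (s^+2 + 1) / s by field.
rewrite Hs; field => //.
Qed.

Local Notation coord := Defs.coord.
Section S.
Variable d : nat.

Lemma coord_phi (w : 'I_d.+1 -> CC) i j : i != j ->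
  coord (phi w) i j = w i / w j + w j / w i.
Proof.
move=> nij; rewrite /coord.
case: insubP => [p Hp Hv|Hn]; first by rewrite ffunE Hv.
case: insubP => [p Hp Hv|Hn2]; first by rewrite ffunE Hv /= addrC.
exfalso; move: Hn Hn2 nij; rewrite /= -!leqNgt => a b.
by rewrite -val_eqE /= eqn_leq a b.
Qed.

Lemma coord_sym (x : point d) i j : coord x i j = coord x j i.
Proof.
rewrite /coord.
case: insubP => [p Hp Hv|Hn]; case: insubP => [q Hq Hw|Hn2] //=.
by exfalso; move: (ltn_trans Hp Hq); rewrite ltnn.
Qed.

Lemma coord_val (x : point d) (p : pairs d) : coord x (val p).1 (val p).2 = x p.
Proof.
rewrite /coord; case: insubP => [q _ Hq | Hn].
  by rewrite (_ : q = p) //; apply: val_inj; rewrite Hq; case: (val p).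
by rewrite (valP p) in Hn.
Qed.

Lemma pair_neq (p : pairs d) : (val p).1 != (val p).2.
Proof. by apply/eqP => E; move: (valP p); rewrite E ltnn. Qed.

End S.

Lemma finish d (x : point d) (w : 'I_d.+1 -> CC) :
  (forall i, w i != 0) -> w ord0 = 1 ->
  (forall j, j != ord0 -> coord x ord0 j = w j + (w j)^-1) ->
  (forall j k, j != ord0 -> k != ord0 -> j != k -> coord x j k = w j / w k + w k / w j) ->
  exists w, (forall i, w i != 0) /\ phi w = x.
Proof.
move=> wn w0 H0 H1; exists w; split=> //.
apply/ffunP => p; rewrite ffunE -coord_val.
have np := @pair_neq _ p.
case: (eqVneq (val p).1 ord0) => [E1|n1].
  have n2 : (val p).2 != ord0 by rewrite -E1 eq_sym.
  by rewrite E1 w0 H0 // div1r divr1 addrC.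
case: (eqVneq (val p).2 ord0) => [E2|n2].
  by rewrite E2 coord_sym w0 H0 // div1r divr1.
by rewrite H1.
Qed.

Theorem theorem2p5 (d : nat) (hd : (1 <= d)%N) (x : point d) :
  (exists w : 'I_d.+1 -> CC, (forall i, w i != 0) /\ phi w = x) <->
  in_zero_locus_I x.
Proof.
split.
  case=> w [wn <-]; split.
    by move=> i j k nij njk nik; rewrite !coord_phi //; apply: g_f.
  by move=> i j k l *; rewrite !coord_phi //; apply: h_f.
case=> Hg Hh.
pose r c := xchoose (root_ex c).
have rn c : r c != 0 by have /andP[] := xchooseP (root_ex c).
have rc c : r c + (r c)^-1 = c by have /andP[_ /eqP] := xchooseP (root_ex c).
pose s j := r (coord x ord0 j).
have QQ j k a b : j != ord0 -> k != ord0 -> j != k -> a != 0 -> b != 0 ->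
    a + a^-1 = coord x ord0 j -> b + b^-1 = coord x ord0 k ->
    coord x j k = a/b+b/a \/ coord x j k = a*b + (a*b)^-1.
  move=> j0 k0 jk an bn Ha Hb; apply: Qlem => //; rewrite Ha Hb.
  by apply: Hg => //; rewrite eq_sym.
case: (boolP [exists m, (m != ord0) && (coord x ord0 m ^+ 2 != 4)]).
  case/existsP => m /andP[m0 m4].
  pose w j := if j == ord0 then 1 else if j == m then s m
     else if coord x m j == s m / s j + s j / s m then s j else (s j)^-1.
  have wn j : w j != 0.
    rewrite /w; case: ifP => _; first exact: oner_neq0.
    case: ifP => _; first exact: rn.
    by case: ifP => _; rewrite ?invr_eq0 rn.
  have w0 : w ord0 = 1 by rewrite /w eqxx.
  have wc j : j != ord0 -> w j + (w j)^-1 = coord x ord0 j.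
    move=> j0; rewrite /w (negPf j0); case: ifP => [/eqP->|_]; first exact: rc.
    by case: ifP => _; [exact: rc| rewrite invrK addrC; exact: rc].
  have wm : w m = s m by rewrite /w (negPf m0) eqxx.
  have C1 j : j != ord0 -> j != m -> coord x m j = w m / w j + w j / w m.
    move=> j0 jm; rewrite wm /w (negPf j0) (negPf jm).
    case: ifP => [/eqP //|/negbT ne].
    have mj : m != j by rewrite eq_sym.
    have := QQ m j (s m) (s j) m0 j0 mj (rn _) (rn _) (rc _) (rc _).
    case=> E; first by rewrite E eqxx in ne.
    rewrite E; field; do ?[apply/andP; split]; by rewrite ?mulf_neq0 ?rn.
  have e0 i : i != ord0 -> coord x ord0 i = w ord0 / w i + w i / w ord0.
    by move=> ?; rewrite w0 div1r divr1 addrC wc.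
  have C2 j k : j != ord0 -> k != ord0 -> j != m -> k != m -> j != k ->
      coord x j k = w j / w k + w k / w j.
    move=> j0 k0 jm km jk.
    have E := h_lin (coord x ord0 m) (coord x ord0 j) (coord x ord0 k)
      (coord x m j) (coord x m k) (coord x j k) (w j / w k + w k / w j).
    have hf : h (coord x ord0 m) (coord x ord0 j) (coord x ord0 k)
      (coord x m j) (coord x m k) (w j / w k + w k / w j) = 0.
      by rewrite (e0 m) // (e0 j) // (e0 k) // C1 // C1 // h_f.
    rewrite hf (Hh ord0 m j k) ?subrr 1?eq_sym // in E.
    all: try by rewrite eq_sym.
    move/eqP: E; rewrite eq_sym mulf_eq0 subr_eq0 eq_sym (negPf m4) /=.
    by rewrite subr_eq0 => /eqP.
  apply: (@finish d x w wn w0 (fun j j0 => esym (wc j j0))).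
  move=> j k j0 k0 jk; case: (eqVneq j m) => [ej|jm].
    by rewrite ej; apply: C1 => //; rewrite -ej eq_sym.
  case: (eqVneq k m) => [->|km]; first by rewrite coord_sym C1 // addrC.
  exact: C2.
move=> /existsPn Hd.
have Hd' m : m != ord0 -> coord x ord0 m ^+ 2 = 4.
  by move=> m0; move: (Hd m); rewrite m0 /= negbK => /eqP.
pose w j := if j == ord0 then 1 else s j.
have wn j : w j != 0 by rewrite /w; case: ifP => _; [exact: oner_neq0|exact: rn].
have w0 : w ord0 = 1 by rewrite /w eqxx.
have wc j : j != ord0 -> w j + (w j)^-1 = coord x ord0 j.
  by move=> j0; rewrite /w (negPf j0) rc.
have ha j : j != ord0 -> w j - (w j)^-1 = 0.
  move=> j0; have : (w j - (w j)^-1)^+2 = 0.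
    rewrite (_ : _ ^+2 = (w j + (w j)^-1)^+2 - 4); first by rewrite wc // Hd' // subrr.
    by field; rewrite wn.
  by move/eqP; rewrite expf_eq0 /= => /eqP.
apply: (@finish d x w wn w0 (fun j j0 => esym (wc j j0))).
move=> j k j0 k0 jk.
have [//|E] := QQ j k (w j) (w k) j0 k0 jk (wn _) (wn _) (wc _ j0) (wc _ k0).
rewrite E; apply/eqP; rewrite -subr_eq0.
rewrite (_ : _ - _ = (w j - (w j)^-1) * (w k - (w k)^-1)); first by rewrite ha // mul0r.
by field; rewrite ?wn.
Qed.
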